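(* Let $\Omega=\bigcup_{j=1}^n (a_j,b_j)\subseteq\mathbb{R}$ be a finite union of bounded open intervals. Let $A\subseteq\mathbb{R}$ be a set with positive minimum gap $\delta$, i.e. $|a-a'|\ge\delta$ for all distinct $a,a'\in A$. Then there is a constant $C>0$, depending only on $\Omega$ and $\delta$, such that for every $R>0$, $$\sum_{a\in A,\ |a|>R} \left|\widehat{\chi_\Omega}(a)\right|^2 \le \frac{C}{R}.$$
   Context: $\chi_\Omega$ denotes the indicator function of $\Omega$, and the Fourier transform is $\widehat{f}(\xi)=\int_{\mathbb{R}} f(x)e^{-2\pi i x\xi}\,dx$. *)

(* Defs.v *)
From HB Require Import structures.
From mathcomp Require Import all_boot all_order all_algebra.
From mathcomp Require Import all_classical all_reals all_analysis.
Set Implicit Arguments. Unset Strict Implicit. Unset Printing Implicit Defensive.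
Import Order.TTheory GRing.Theory Num.Theory.
Local Open Scope classical_set_scope.
Local Open Scope ring_scope.

Definition Omega {R : realType} (n : nat) (a b : 'I_n -> R) : set R :=
  [set x | exists j : 'I_n, a j < x < b j].

(* Real and imaginary parts of  hat(chi_Omega)(xi) = int_Omega e^{-2 pi i x xi} dx *)
Definition FT_re {R : realType} (O : set R) (xi : R) : R :=
  Rintegral lebesgue_measure O (fun x => cos (2 * pi * x * xi)).
Definition FT_im {R : realType} (O : set R) (xi : R) : R :=
  - Rintegral lebesgue_measure O (fun x => sin (2 * pi * x * xi)).

Definition FT_sqnorm {R : realType} (O : set R) (xi : R) : R :=
  FT_re O xi ^+ 2 + FT_im O xi ^+ 2.

Definition has_min_gap {R : realType} (A : set R) (delta : R) : Prop :=
  forall x y, A x -> A y -> x <> y -> delta <= `|x - y|.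

(* Main.v *)
Require Import Defs.
From HB Require Import structures.
From mathcomp Require Import all_boot all_order all_algebra.
From mathcomp Require Import all_classical all_reals all_analysis.
From mathcomp Require Import ring lra.
Import Order.TTheory GRing.Theory Num.Theory.
Import numFieldNormedType.Exports.
Local Open Scope classical_set_scope.
Local Open Scope ring_scope.

Lemma itv_bound (R : realType) (f F : R -> R) (B : R) :
  continuous f -> (forall x, is_derive (x:R) (1:R) F (f x)) -> (forall x, `|F x| <= B) ->
  forall s t, `| \int[lebesgue_measure]_(x in `]s, t[) f x | <= 2 * B.
Proof.
move=> cf dF FB s t.
have B0 : 0 <= B by apply: le_trans (FB 0).
have [st|ts] := ltP s t; last first.
  rewrite set_itv_ge ?bnd_simp -?leNgt // Rintegral_set0 normr0.
  by rewrite mulr_ge0.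
have ic : lebesgue_measure.-integrable `[s, t] (EFin \o f).
  apply: continuous_compact_integrable; first exact: segment_compact.
  by move=> x; apply: continuous_subspaceT.
rewrite Rintegral_itv_obnd_cbnd; last first.
  by apply: integrableS ic => //; apply: subset_itv_oo_cc.
rewrite Rintegral_itv_bndo_bndc; last first.
  by apply: integrableS ic => //; apply: subset_itv; rewrite bnd_simp.
rewrite /Rintegral (@continuous_FTC2 _ f F _ _ st) /=.
- apply: le_trans (ler_normB _ _) _.
  by rewrite mulrDl mul1r lerD.
- by move=> x; apply: continuous_subspaceT.
- split.
  + by move=> x _; exact: ex_derive.
  + apply: cvg_at_right_filter.
    by apply: differentiable_continuous; apply/derivable1_diffP; exact: ex_derive.
  + apply: cvg_at_left_filter.
    by apply: differentiable_continuous; apply/derivable1_diffP; exact: ex_derive.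
- by move=> x _; rewrite derive1E derive_val.
Qed.
Definition Oseq {R : realType} (s : seq (R * R)) : set R :=
  [set x | exists2 p, p \in s & p.1 < x < p.2].

Lemma Oseq_nil {R : realType} : Oseq [::] = set0 :> set R.
Proof. by apply/seteqP; split=> x //= [p]. Qed.

Lemma Oseq_cons {R : realType} (p : R * R) s :
  Oseq (p :: s) = `]p.1, p.2[ `|` Oseq s.
Proof.
apply/seteqP; split=> x /=.
  move=> [q]; rewrite inE => /orP[/eqP->|qs] xq.
    by left; rewrite in_itv.
  by right; exists q.
case=> [|[q qs xq]].
  by rewrite in_itv /= => xp; exists p => //; rewrite mem_head.
by exists q => //; rewrite inE qs orbT.
Qed.

Notation mes R := (@measurable _ (measurableTypeR R)).

Lemma Oseq_meas {R : realType} (s : seq (R * R)) : mes R (Oseq s).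
Proof.
elim: s => [|p s IH]; first by rewrite Oseq_nil.
by rewrite Oseq_cons; apply: measurableU => //; exact: measurable_itv.
Qed.

Lemma Oseq_bdd {R : realType} (s : seq (R * R)) :
  exists T : R, 0 <= T /\ Oseq s `<=` `[- T, T].
Proof.
elim: s => [|p s [T [T0 IH]]].
  by exists 0; split => //; rewrite Oseq_nil.
exists (`|p.1| + `|p.2| + T); split.
  by rewrite !addr_ge0.
rewrite Oseq_cons => x [|/IH]; rewrite /= !in_itv /= => /andP[h1 h2].
  have := ler_norm (- p.1); rewrite normrN => a1.
  have := ler_norm p.2 => a2.
  have := normr_ge0 p.1; have := normr_ge0 p.2.
  move=> ? ?; apply/andP; split; lra.
have := normr_ge0 p.1; have := normr_ge0 p.2.
move=> ? ?; apply/andP; split; lra.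
Qed.
Lemma int_sub {R : realType} (f : R -> R) (A : set R) : continuous f -> mes R A ->
  (exists T, A `<=` `[- T, T]) -> lebesgue_measure.-integrable A (EFin \o f).
Proof.
move=> cf mA [T AT].
have h : lebesgue_measure.-integrable `[- T, T] (EFin \o f).
  apply: continuous_compact_integrable; first exact: segment_compact.
  by move=> x; apply: continuous_subspaceT.
apply: (integrableS _ _ _ h) => //.
Qed.
Lemma Rint_union {R : realType} (f : R -> R) (A B : set R) :
  mes R A -> mes R B ->
  lebesgue_measure.-integrable (A `|` B) (EFin \o f) ->
  \int[lebesgue_measure]_(x in A `|` B) f x =
  \int[lebesgue_measure]_(x in A) f x + \int[lebesgue_measure]_(x in B) f x
  - \int[lebesgue_measure]_(x in B `&` A) f x.
Proof.
move=> mA mB iAB.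
have e1 : A `|` B = A `|` (B `\` A).
  apply/seteqP; split=> x /=; case: (pselect (A x)); tauto.
have e2 : B = (B `\` A) `|` (B `&` A).
  apply/seteqP; split=> x /=; case: (pselect (A x)); tauto.
have iB : lebesgue_measure.-integrable B (EFin \o f).
  by apply: (integrableS _ _ _ iAB) => //; try exact: measurableU; try exact: subsetUr.
have mBA : mes R (B `\` A) by exact: measurableD.
have mBiA : mes R (B `&` A) by exact: measurableI.
have d1 : [disjoint A & B `\` A] by apply/disj_setPS => x /= [? []].
have d2 : [disjoint B `\` A & B `&` A] by apply/disj_setPS => x /= [[? ?] [? ?]].
have h1 := @Rintegral_setU _ _ _ lebesgue_measure _ _ f mA mBA.
have h2 := @Rintegral_setU _ _ _ lebesgue_measure _ _ f mBA mBiA.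
rewrite -e1 in h1; rewrite -e2 in h2.
rewrite (h1 iAB d1) (h2 iB d2).
by rewrite addrA addrK.
Qed.
Definition cut {R : realType} (p : R * R) (s : seq (R * R)) :=
  map (fun q => (Num.max q.1 p.1, Num.min q.2 p.2)) s.

Lemma Oseq_inter {R : realType} (p : R * R) s :
  Oseq s `&` `]p.1, p.2[ = Oseq (cut p s).
Proof.
apply/seteqP; split=> x /=.
  move=> [[q qs /andP[h1 h2]]]; rewrite in_itv /= => /andP[h3 h4].
  exists (Num.max q.1 p.1, Num.min q.2 p.2).
    by apply/mapP; exists q.
  by rewrite /= gt_max lt_min h1 h2 h3 h4.
move=> [q' /mapP[q qs ->]]; rewrite /= gt_max lt_min => /and3P[/andP[h1 h3] h2 h4].
split; first by exists q => //; rewrite h1 h2.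
by rewrite in_itv /= h3 h4.
Qed.

Lemma size_cut {R : realType} (p : R * R) s : size (cut p s) = size s.
Proof. by rewrite size_map. Qed.

Lemma IE {R : realType} (f : R -> R) (M : R) : continuous f ->
  (forall s t, `| \int[lebesgue_measure]_(x in `]s, t[) f x | <= M) ->
  forall n (s : seq (R * R)), size s = n ->
  `| \int[lebesgue_measure]_(x in Oseq s) f x | <= (2 ^+ n - 1) * M.
Proof.
move=> cf hM; elim=> [|n IH] [|p s] //=.
  by rewrite Oseq_nil Rintegral_set0 normr0 expr0 subrr mul0r.
move=> [sn].
have hs := IH _ sn.
have hc := IH _ (etrans (size_cut p s) sn).
rewrite Oseq_cons Rint_union; last 3 first.
- exact: measurable_itv.
- exact: Oseq_meas.
- apply: int_sub => //.
  + by rewrite -Oseq_cons; exact: Oseq_meas.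
  + by rewrite -Oseq_cons; have [T [_ h]] := Oseq_bdd (p :: s); exists T.
rewrite Oseq_inter.
apply: le_trans (ler_normB _ _) _.
apply: le_trans (lerD (ler_normD _ _) hc) _.
apply: le_trans (lerD (lerD (hM p.1 p.2) hs) (lexx _)) _.
rewrite exprS; suff -> : M + (2 ^+ n - 1) * M + (2 ^+ n - 1) * M = (2 * 2 ^+ n - 1) * M by [].
ring.
Qed.
Lemma der_lin {R : realType} (c x : R) : is_derive x (1:R) (fun y : R => c * y) c.
Proof.
apply: is_derive_eq.
by rewrite /GRing.scale /= mulr1.
Qed.

Lemma der_sin {R : realType} (c x : R) : c != 0 ->
  is_derive x (1:R) (fun y : R => c^-1 * sin (c * y)) (cos (c * x)).
Proof.
move=> c0.
have h1 := @is_derive1_comp R sin (fun y => c * y) x _ _ (is_derive_sin (c * x)) (der_lin c x).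
have h2 := @is_deriveM R R (fun _ => c^-1) (sin \o (fun y => c * y)) x 1 0 _ (is_derive_cst _ _ _) h1.
have e : cos (c * x) = c^-1 *: (cos (c * x) * c) + (sin \o [eta  *%R c]) x *: 0.
  rewrite scaler0 addr0 /GRing.scale /=; field; exact: c0.
rewrite e; exact: h2.
Qed.

Lemma der_cos {R : realType} (c x : R) : c != 0 ->
  is_derive x (1:R) (fun y : R => - c^-1 * cos (c * y)) (sin (c * x)).
Proof.
move=> c0.
have h1 := @is_derive1_comp R cos (fun y => c * y) x _ _ (is_derive_cos (c * x)) (der_lin c x).
have h2 := @is_deriveM R R (fun _ => - c^-1) (cos \o (fun y => c * y)) x 1 0 _ (is_derive_cst _ _ _) h1.
have e : sin (c * x) = - c^-1 *: (- sin (c * x) * c) + (cos \o [eta  *%R c]) x *: 0.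
  rewrite scaler0 addr0 /GRing.scale /=; field; exact: c0.
rewrite e; exact: h2.
Qed.
Lemma Rint_le_meas {R : realType} (f : R -> R) (A : set R) (T : R) :
  continuous f -> (forall x, `|f x| <= 1) -> mes R A -> 0 <= T -> A `<=` `[- T, T] ->
  `| \int[lebesgue_measure]_(x in A) f x | <= 2 * T.
Proof.
move=> cf f1 mA T0 AT.
have hA : exists T', A `<=` `[- T', T'] by exists T.
apply: le_trans (le_normr_Rintegral mA (int_sub f A cf mA hA)) _.
have cn : continuous (fun x => `|f x|).
  by move=> x; apply: continuous_comp; [exact: cf|exact: norm_continuous].
have h2 : \int[lebesgue_measure]_(x in A) `|f x| <= \int[lebesgue_measure]_(x in A) 1.
  apply: le_Rintegral => //.
  - exact: (int_sub _ A cn mA hA).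
  - by apply: int_sub => // x; exact: cvg_cst.
apply: le_trans h2 _.
rewrite Rintegral_cst // mul1r.
have hle : (lebesgue_measure A <= lebesgue_measure `[(- T)%R, T])%E.
  by apply: le_measure => //; rewrite inE //; exact: measurable_itv.
have hle2 : (lebesgue_measure A <= (2 * T)%:E)%E.
  apply: le_trans hle _; rewrite lebesgue_measure_itv /=.
  case: ifP => _.
    by rewrite -EFinB lee_fin; lra.
  by rewrite lee_fin; lra.
have fA : lebesgue_measure A \is a fin_num.
  by rewrite ge0_fin_numE ?measure_ge0 // (le_lt_trans hle2) ?ltey.
by rewrite -lee_fin fineK.
Qed.
Lemma Omega_Oseq {R : realType} n (a b : 'I_n -> R) :
  Omega a b = Oseq (map (fun j => (a j, b j)) (enum 'I_n)).
Proof.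
apply/seteqP; split=> x /=.
  move=> [j hj]; exists (a j, b j) => //.
  by apply/mapP; exists j => //; rewrite mem_enum.
by move=> [p /mapP[j _ ->] hj]; exists j.
Qed.

Lemma cont_lin {R : realType} (c : R) : continuous (fun x : R => c * x).
Proof.
move=> x; apply: differentiable_continuous; apply/derivable1_diffP.
have h := der_lin c x; exact: ex_derive.
Qed.

Lemma osc_bound {R : realType} (s : seq (R * R)) (f F : R -> R) (B : R) :
  continuous f -> (forall x, is_derive (x:R) (1:R) F (f x)) -> (forall x, `|F x| <= B) ->
  `| \int[lebesgue_measure]_(x in Oseq s) f x | <= (2 ^+ size s - 1) * (2 * B).
Proof.
move=> cf dF FB.
by apply: (IE f (2 * B) cf _ (size s) s) => // s' t; exact: (itv_bound R f F B).
Qed.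
Lemma sq_le {R : realType} (a E : R) : `|a| <= E -> a ^+ 2 <= E ^+ 2.
Proof.
move=> h; rewrite -(real_normK (num_real a)); have := normr_ge0 a; nra.
Qed.

Lemma sq_help {R : realType} (x a E D : R) : `|a| <= E -> `|x| * E = D ->
  x ^+ 2 * a ^+ 2 <= D ^+ 2.
Proof.
move=> h e; rewrite -(real_normK (num_real x)) -e exprMn.
by rewrite ler_wpM2l ?sqr_ge0 // sq_le.
Qed.

Lemma FT_bound {R : realType} (s : seq (R * R)) : exists L K : R, 0 <= L /\ 0 <= K /\
  forall xi, FT_sqnorm (Oseq s) xi <= L /\ xi ^+ 2 * FT_sqnorm (Oseq s) xi <= K.
Proof.
have [T [T0 hT]] := Oseq_bdd s.
have pi0 := @pi_gt0 R.
have N1 : 1 <= 2 ^+ size s :> R by rewrite exprn_ege1 // ler1n.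
pose D : R := (2 ^+ size s - 1) / pi.
have D0 : 0 <= D by rewrite divr_ge0 ?subr_ge0 // ltW.
exists (2 * (2 * T) ^+ 2), (2 * D ^+ 2); split; first by rewrite mulr_ge0 ?sqr_ge0.
split; first by rewrite mulr_ge0 ?sqr_ge0.
move=> xi.
pose c : R := 2 * pi * xi.
have ecos : FT_re (Oseq s) xi =
    \int[lebesgue_measure]_(x in Oseq s) cos (c * x).
  by apply: eq_Rintegral => x _; rewrite /c mulrAC.
have esin : FT_im (Oseq s) xi =
    - \int[lebesgue_measure]_(x in Oseq s) sin (c * x).
  by congr (- _); apply: eq_Rintegral => x _; rewrite /c mulrAC.
have ccos : continuous (fun x => cos (c * x)).
  by move=> x; apply: continuous_comp; [exact: cont_lin|exact: continuous_cos].
have csin : continuous (fun x => sin (c * x)).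
  by move=> x; apply: continuous_comp; [exact: cont_lin|exact: continuous_sin].
rewrite /FT_sqnorm ecos esin sqrrN.
split.
  have h1 := Rint_le_meas _ _ T ccos (fun x => cos_max _) (Oseq_meas s) T0 hT.
  have h2 := Rint_le_meas _ _ T csin (fun x => sin_max _) (Oseq_meas s) T0 hT.
  have := sq_le _ _ h1; have := sq_le _ _ h2; lra.
have [->|xi0] := eqVneq xi 0.
  by rewrite expr0n /= mul0r mulr_ge0 ?sqr_ge0.
have c0 : c != 0 by rewrite /c !mulf_neq0 // ?gt_eqF.
pose E : R := (2 ^+ size s - 1) * (2 * `|c|^-1).
have e : `|xi| * E = D.
  rewrite /E /D /c !normrM (gtr0_norm pi0) (@ger0_norm _ 2) ?ler0n //.
  have nx : `|xi| != 0 by rewrite normr_eq0.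
  have np : pi != 0 :> R by rewrite gt_eqF.
  move: np; move: (pi : R) => P np.
  by field; rewrite np nx.
have hF1 : forall x, `|c^-1 * sin (c * x)| <= `|c|^-1.
  move=> x; rewrite normrM normfV -[leRHS]mulr1 ler_wpM2l ?invr_ge0 ?normr_ge0 //.
  exact: sin_max.
have hF2 : forall x, `|- c^-1 * cos (c * x)| <= `|c|^-1.
  move=> x; rewrite normrM normrN normfV -[leRHS]mulr1 ler_wpM2l ?invr_ge0 ?normr_ge0 //.
  exact: cos_max.
have h1 := osc_bound s _ _ _ ccos (fun x => der_sin c x c0) hF1.
have h2 := osc_bound s _ _ _ csin (fun x => der_cos c x c0) hF2.
have := sq_help _ _ _ _ h1 e; have := sq_help _ _ _ _ h2 e.
lra.
Qed.
Lemma tail_ineq {R : realType} (K d x : R) : 0 < d -> 0 < x -> 0 <= K ->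
  K / (x + d) ^+ 2 + K / (d * (x + d)) <= K / (d * x).
Proof.
move=> d0 x0 K0.
have xd : x + d != 0 by rewrite gt_eqF // addr_gt0.
have dn : d != 0 by rewrite gt_eqF.
have xn : x != 0 by rewrite gt_eqF.
rewrite -subr_ge0.
have -> : K / (d * x) - (K / (x + d) ^+ 2 + K / (d * (x + d))) = K * d / (x * (x + d) ^+ 2).
  by field; rewrite xd dn xn.
apply: divr_ge0; [apply: mulr_ge0 => //; exact: ltW | apply: mulr_ge0; [exact: ltW|exact: sqr_ge0]].
Qed.

Lemma inv_mono {R : realType} (K d x t : R) : 0 < d -> 0 < t -> t <= x -> 0 <= K ->
  K / (d * x) <= K / (d * t).
Proof.
move=> d0 t0 tx K0.
rewrite ler_wpM2l // lef_pV2 ?posrE ?mulr_gt0 // ?(lt_le_trans t0) //.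
by rewrite ler_wpM2l // ltW.
Qed.

Lemma h_le {R : realType} (h : R -> R) (K u y : R) : (forall y, y ^+ 2 * h y <= K) ->
  0 <= K -> 0 < u -> u <= y -> h y <= K / u ^+ 2.
Proof.
move=> hK K0 u0 uy.
have y0 : 0 < y by apply: lt_le_trans uy.
have h1 : h y <= K / y ^+ 2 by rewrite ler_pdivlMr ?exprn_gt0 // mulrC hK.
apply: le_trans h1 _.
apply: (ler_wpM2l K0); rewrite lef_pV2 ?posrE ?exprn_gt0 //.
by rewrite lerXn2r // ?nnegrE ltW.
Qed.
Lemma seq_bound {R : realType} (h : R -> R) (K d : R) : 0 < d -> 0 <= K ->
  (forall y, 0 <= h y) -> (forall y, y ^+ 2 * h y <= K) ->
  forall s : seq R, sorted <=%R s -> uniq s ->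
  (forall y z, y \in s -> z \in s -> y != z -> d <= `|y - z|) ->
  forall t B, 0 < t -> (forall y, t <= y -> h y <= B) -> all (fun y => t <= y) s ->
  \sum_(y <- s) h y <= B + K / (d * t).
Proof.
move=> d0 K0 h0 hK; elim=> [|x s IH] srt us gap t B t0 hB.
  move=> _; rewrite big_nil; apply: addr_ge0.
    exact: le_trans (h0 t) (hB t (lexx t)).
  by rewrite divr_ge0 // mulr_ge0 // ltW.
move=> /andP[tx alls].
rewrite big_cons.
have x0 : 0 < x by apply: lt_le_trans tx.
have srt' : sorted <=%R s := path_sorted srt.
have allx : all (fun y => x <= y) s by exact: (order_path_min le_trans srt).
move: us => /= /andP[xs us].
have alls' : all (fun y => x + d <= y) s.
  apply/allP => y ys.
  have xy : x <= y by exact: (allP allx y ys).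
  have ne : x != y by apply: contraNneq xs => ->.
  have ys' : y \in x :: s by rewrite inE ys orbT.
  have := gap x y (mem_head _ _) ys' ne.
  rewrite distrC ger0_norm ?subr_ge0 //; lra.
have xd0 : 0 < x + d by rewrite addr_gt0.
have gap' : forall y z, y \in s -> z \in s -> y != z -> d <= `|y - z|.
  by move=> y z ys zs; apply: gap; rewrite inE ?ys ?zs orbT.
have hB' : forall y, x + d <= y -> h y <= K / (x + d) ^+ 2.
  by move=> y; apply: h_le.
have H := IH srt' us gap' (x + d) (K / (x + d) ^+ 2) xd0 hB' alls'.
have H2 := tail_ineq K d x d0 x0 K0.
have H3 := inv_mono K d x t d0 t0 tx K0.
have H4 := hB x tx.
lra.
Qed.
Lemma num1 {R : realType} (L K r : R) : 1 <= r -> 0 <= L -> 0 <= K ->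
  K / r ^+ 2 <= (L + K) / r.
Proof.
move=> r1 L0 K0.
have r0 : 0 < r by apply: lt_le_trans r1; exact: ltr01.
rewrite ler_pdivlMr //.
have -> : K / r ^+ 2 * r = K / r by field; rewrite gt_eqF.
rewrite ler_pdivrMr //; nra.
Qed.

Lemma num2 {R : realType} (L K r : R) : 0 < r -> r < 1 -> 0 <= L -> 0 <= K ->
  L <= (L + K) / r.
Proof.
move=> r0 r1 L0 K0.
rewrite ler_pdivlMr //; nra.
Qed.

Lemma half_bound {R : realType} (h : R -> R) (L K d r : R) : 0 < d -> 0 <= K -> 0 < r ->
  (forall y, 0 <= h y) -> (forall y, h y <= L) -> (forall y, y ^+ 2 * h y <= K) ->
  forall l : seq R, uniq l ->
  (forall y z, y \in l -> z \in l -> y != z -> d <= `|y - z|) ->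
  all (fun y => r <= y) l ->
  \sum_(y <- l) h y <= (L + K + K / d) / r.
Proof.
move=> d0 K0 r0 h0 hL hK l ul gap alll.
have L0 : 0 <= L by apply: le_trans (h0 0) (hL 0).
rewrite -(perm_big _ (permEl (perm_sort <=%R l))).
have hB : forall y, r <= y -> h y <= (L + K) / r.
  move=> y ry; have [r1|r1] := leP 1 r.
    by apply: le_trans (h_le h K r y hK K0 r0 ry) _; exact: num1.
  by apply: le_trans (hL y) _; exact: num2.
have us : uniq (sort <=%R l) by rewrite sort_uniq.
have gs : forall y z, y \in sort <=%R l -> z \in sort <=%R l -> y != z -> d <= `|y - z|.
  by move=> y z; rewrite !mem_sort; exact: gap.
have als : all (fun y => r <= y) (sort <=%R l).
  by apply/allP => y; rewrite mem_sort; exact: (allP alll).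
have := seq_bound h K d d0 K0 h0 hK (sort <=%R l) (sort_sorted le_total l)
  us gs r ((L + K) / r) r0 hB als.
have -> : (L + K + K / d) / r = (L + K) / r + K / (d * r).
  by field; rewrite !gt_eqF.
done.
Qed.
Lemma full_bound {R : realType} (h : R -> R) (L K d r : R) : 0 < d -> 0 <= K -> 0 < r ->
  (forall y, 0 <= h y) -> (forall y, h y <= L) -> (forall y, y ^+ 2 * h y <= K) ->
  forall l : seq R, uniq l ->
  (forall y z, y \in l -> z \in l -> y != z -> d <= `|y - z|) ->
  all (fun y => r < `|y|) l ->
  \sum_(y <- l) h y <= 2 * ((L + K + K / d) / r).
Proof.
move=> d0 K0 r0 h0 hL hK l ul gap alll.
rewrite (bigID (fun y => 0 < y)) /= mulr2n mulrDl mul1r.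
apply: lerD.
  rewrite -big_filter; apply: half_bound => //.
  - by rewrite filter_uniq.
  - by move=> y z; rewrite !mem_filter => /andP[_ ys] /andP[_ zs]; exact: gap.
  - apply/allP => y; rewrite mem_filter => /andP[y0 ys].
    by have := allP alll y ys; rewrite gtr0_norm // => /ltW.
rewrite -big_filter.
set l2 := [seq i <- l | ~~ (0 < i)].
have -> : \sum_(y <- l2) h y = \sum_(z <- map -%R l2) h (- z).
  by rewrite big_map; apply: eq_bigr => y _; rewrite opprK.
have hnK : forall y, y ^+ 2 * h (- y) <= K by move=> y; rewrite -sqrrN; exact: hK.
have un : uniq (map -%R l2).
  by rewrite map_inj_uniq ?filter_uniq //; exact: oppr_inj.
have gn : forall y z, y \in map -%R l2 -> z \in map -%R l2 -> y != z -> d <= `|y - z|.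
  move=> y z /mapP[y' y's ->] /mapP[z' z's ->] ne.
  have -> : - y' - - z' = - (y' - z') by ring.
  rewrite normrN; apply: gap; rewrite ?(mem_filter, inE) in y's z's.
  + by case/andP: y's.
  + by case/andP: z's.
  + by apply: contraNneq ne => ->.
have an : all (fun y => r <= y) (map -%R l2).
  apply/allP => y /mapP[y' y's ->]; rewrite mem_filter in y's.
  case/andP: y's => y0 ys.
  have yn : y' <= 0 by rewrite leNgt.
  by have := allP alll y' ys; rewrite ler0_norm // => /ltW.
exact: (half_bound (fun z => h (- z)) L K d r d0 K0 r0 (fun y => h0 (- y)) (fun y => hL (- y)) hnK _ un gn an).
Qed.

Theorem lemma1 (R : realType) (n : nat) (a b : 'I_n -> R)
  (hab : forall j, a j < b j) (delta : R) (hdelta : 0 < delta) :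
  exists C : R, 0 < C /\
    forall A : set R, has_min_gap A delta ->
    forall r : R, 0 < r ->
      (esum [set y | A y /\ (r < `|y|)%R] (fun x => (FT_sqnorm (Omega a b) x)%:E)
        <= (C / r)%:E)%E.
Proof.
rewrite Omega_Oseq.
set s := map _ _.
have [L [K [L0 [K0 hLK]]]] := FT_bound s.
pose h := fun y => FT_sqnorm (Oseq s) y.
have h0 : forall y, 0 <= h y by move=> y; rewrite /h /FT_sqnorm addr_ge0 ?sqr_ge0.
have hL : forall y, h y <= L by move=> y; case: (hLK y).
have hK : forall y, y ^+ 2 * h y <= K by move=> y; case: (hLK y).
have Q0 : 0 <= L + K + K / delta by rewrite !addr_ge0 // divr_ge0 // ltW.
exists (2 * (L + K + K / delta) + 1); split.
  by rewrite ltr_pwDr // mulr_ge0.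
move=> A gapA r r0.
apply: ge_ereal_sup => _ [X [finX XA] <-].
rewrite fsbig_finite // sumEFin lee_fin.
set l := finmap.enum_fset (fset_set X).
have ul : uniq l by exact: finmap.fset_uniq.
have memX : forall y, y \in l -> X y.
  move=> y yl; have := in_fset_set finX y => e; apply: set_mem; rewrite -e; exact: yl.
have gl : forall y z, y \in l -> z \in l -> y != z -> delta <= `|y - z|.
  move=> y z /memX /XA [Ay _] /memX /XA [Az _] ne.
  by apply: gapA => //; exact/eqP.
have al : all (fun y => r < `|y|) l.
  by apply/allP => y /memX /XA [].
apply: le_trans (full_bound h L K delta r hdelta K0 r0 h0 hL hK _ ul gl al) _.
rewrite mulrA ler_pM2r ?invr_gt0 //.
by rewrite lerDl.
Qed.
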